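(* Let $(T,b)$ be a branched ideal triangulation of $(S,V)$ and let $e$ be an edge of $T$ which is ambiguous and untrapped in $(T,b)$. Let $b'$ be the branching obtained from $b$ by reversing the orientation of $e$. Then $(T,b)$ and $(T,b')$ are connected by a sequence of two $b$-flips.
   Context: $S$ is a compact closed connected surface and $V\subset S$ is a finite set of marked points with $\chi(S)-|V|<0$. An ideal triangulation $T$ of $(S,V)$ is a possibly loose triangulation of $S$ with vertex set $V$, obtained by gluing abstract triangles along abstract edges in pairs. A branching $b$ is an orientation of all edges which on each abstract triangle is induced by a total order of its vertices, edges pointing to the larger endpoint. An edge is trapped if it results from identifying two edges of a single abstract triangle, and untrapped otherwise. An edge $e$ is ambiguous in $(T,b)$ if reversing the orientation of $e$ alone yields a branching. A (naked) flip at an untrapped edge $e$ shared by two abstract triangles forming a quadrilateral replaces $e$ by the other diagonal. A $b$-flip is such a flip together with an orientation of the new diagonal such that, all other edges keeping their orientation, the result is branched. *)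

(* Defs.v *)
(* Combinatorial model of ideal triangulations of a closed
   surface obtained by gluing abstract triangles along their edges in pairs. *)
From HB Require Import structures.
From mathcomp Require Import all_boot all_order all_algebra all_fingroup.
Set Implicit Arguments. Unset Strict Implicit. Unset Printing Implicit Defensive.

Section Triangulations.
Variable Tri : finType.

(* Each abstract triangle t has vertices labelled by 'I_3.  A dart (t,a,b)
   is the side of t from vertex a to vertex b (meaningful when a != b). *)
Definition dart := (Tri * 'I_3 * 'I_3)%type.
Definition dtri (x : dart) : Tri := x.1.1.
Definition dsrc (x : dart) : 'I_3 := x.1.2.
Definition dtgt (x : dart) : 'I_3 := x.2.
Definition is_side (x : dart) : bool := dsrc x != dtgt x.
Definition drev (x : dart) : dart := (dtri x, dtgt x, dsrc x).

(* A gluing: (t,a,b) is glued to glue (t,a,b) = (t',a',b'), identifying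
   vertex a of t with a' of t' and b with b'. *)
Definition gluing := dart -> dart.

Definition is_triangulation (g : gluing) : Prop :=
  forall x, is_side x ->
    [/\ is_side (g x), g (g x) = x, g (drev x) = drev (g x),
        g x <> x & g x <> drev x].

(* the four darts representing the edge of T containing the dart d *)
Definition in_edge (g : gluing) (d x : dart) : bool :=
  [|| x == d, x == drev d, x == g d | x == drev (g d)].

Definition trapped (g : gluing) (d : dart) : bool := dtri (g d) == dtri d.

(* An orientation of the edges: o x = true iff the edge is oriented along x.
   A branching: compatible with the gluing, and on every abstract triangle
   induced by a total order of its vertices. *)
Definition is_branching (g : gluing) (o : dart -> bool) : Prop :=
  (forall t : Tri, exists r : 'I_3 -> nat, injective r /\
      forall a b : 'I_3, a != b -> o (t, a, b) = (r a < r b)) /\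
  (forall x, is_side x -> o (g x) = o x).

Definition reverse_at (g : gluing) (d : dart) (o : dart -> bool) : dart -> bool :=
  fun x => if in_edge g d x then ~~ o x else o x.

Definition ambiguous (g : gluing) (o : dart -> bool) (d : dart) : Prop :=
  is_branching g (reverse_at g d o).

Definition third (a b : 'I_3) : 'I_3 := odflt a [pick c | (c != a) && (c != b)].

(* Quadrilateral: t1 = (a1,b1,c1) with e = (a1,b1); t2 = (a2,b2,c2) with
   (a2,b2) = glue (a1,b1).  After the flip t1 keeps the roles
   a1 |-> a, c1 |-> c1, b1 |-> c2 and t2 : a2 |-> c1, b2 |-> b, c2 |-> c2.
   flip_phi relocates the sides of the quadrilateral (old dart -> new dart). *)
Definition flip_phi (g : gluing) (d x : dart) : dart :=
  let t1 := dtri d in let a1 := dsrc d in let b1 := dtgt d in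
  let c1 := third a1 b1 in
  let t2 := dtri (g d) in let a2 := dsrc (g d) in let b2 := dtgt (g d) in
  let c2 := third a2 b2 in
  if x == (t1, c1, b1) then (t2, a2, b2)
  else if x == (t1, b1, c1) then (t2, b2, a2)
  else if x == (t2, c2, a2) then (t1, b1, a1)
  else if x == (t2, a2, c2) then (t1, a1, b1)
  else x.

Definition flip_phiinv (g : gluing) (d x : dart) : dart :=
  let t1 := dtri d in let a1 := dsrc d in let b1 := dtgt d in
  let c1 := third a1 b1 in
  let t2 := dtri (g d) in let a2 := dsrc (g d) in let b2 := dtgt (g d) in
  let c2 := third a2 b2 in
  if x == (t2, a2, b2) then (t1, c1, b1)
  else if x == (t2, b2, a2) then (t1, b1, c1)
  else if x == (t1, b1, a1) then (t2, c2, a2)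
  else if x == (t1, a1, b1) then (t2, a2, c2)
  else x.

(* the new gluing: the new diagonal c1--c2 is (t1,c1,b1) ~ (t2,a2,c2) *)
Definition flip (g : gluing) (d : dart) : gluing := fun x =>
  let t1 := dtri d in let a1 := dsrc d in let b1 := dtgt d in
  let c1 := third a1 b1 in
  let t2 := dtri (g d) in let a2 := dsrc (g d) in let b2 := dtgt (g d) in
  let c2 := third a2 b2 in
  if x == (t1, c1, b1) then (t2, a2, c2)
  else if x == (t1, b1, c1) then (t2, c2, a2)
  else if x == (t2, a2, c2) then (t1, c1, b1)
  else if x == (t2, c2, a2) then (t1, b1, c1)
  else flip_phi g d (g (flip_phiinv g d x)).

Definition br_iso (g : gluing) (o : dart -> bool) (g' : gluing) (o' : dart -> bool)
  : Prop :=
  exists (f : {perm Tri}) (p : Tri -> {perm 'I_3}),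
    let delta (x : dart) : dart :=
      (f (dtri x), p (dtri x) (dsrc x), p (dtri x) (dtgt x)) in
    forall x, is_side x -> g' (delta x) = delta (g x) /\ o' (delta x) = o x.

(* b-flip: a flip at an untrapped edge together with an orientation of the new
   diagonal such that, all other edges keeping their orientation, the result
   is branched (the result being taken up to isomorphism). *)
Definition bflip (g : gluing) (o : dart -> bool) (g' : gluing) (o' : dart -> bool)
  : Prop :=
  exists d : dart, [/\ is_side d, ~~ trapped g d &
    exists o'' : dart -> bool,
      [/\ is_branching (flip g d) o'',
          (forall x, is_side x -> ~~ in_edge g d x -> o'' (flip_phi g d x) = o x)
        & br_iso (flip g d) o'' g' o']].

Definition tri_adj (g : gluing) : rel Tri := fun t t' =>
  [exists a : 'I_3, exists b : 'I_3, (a != b) && (dtri (g (t, a, b)) == t')].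

Definition tri_connected (g : gluing) : Prop :=
  forall t t' : Tri, connect (tri_adj g) t t'.

(* corners (t,a) identified through the gluing give the vertices V *)
Definition corner_rel (g : gluing) : rel (Tri * 'I_3) := fun c c' =>
  [exists b : 'I_3, (b != c.2) &&
     ((dtri (g (c.1, c.2, b)) == c'.1) && (dsrc (g (c.1, c.2, b)) == c'.2))].

Definition n_vertices (g : gluing) : nat := n_comp (corner_rel g) predT.

Definition edge_rel (g : gluing) : rel dart := fun x y =>
  is_side x && ((y == drev x) || (y == g x)).

Definition n_edges (g : gluing) : nat := n_comp (edge_rel g) [pred x | is_side x].

Definition euler_char (g : gluing) : int :=
  (n_vertices g)%:Z - (n_edges g)%:Z + (#|Tri|)%:Z.

End Triangulations.

(* Main.v *)
Require Import Defs.
From HB Require Import structures.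
From mathcomp Require Import all_boot all_order all_algebra all_fingroup.
From mathcomp Require Import zify.
Lemma ord3_cases (a b c x : 'I_3) : a != b -> a != c -> b != c -> [|| x == a, x == b | x == c].
Proof. by move: a b c x => [[|[|[|?]]] ?] [[|[|[|?]]] ?] [[|[|[|?]]] ?] [[|[|[|?]]] ?]. Qed.
Lemma ord3_ex (a b : 'I_3) : exists c : 'I_3, (c != a) && (c != b).
Proof.
move: a b => [[|[|[|?]]] ?] [[|[|[|?]]] ?] //;
 solve [exists (Ordinal (isT : 0 < 3)) => // | exists (Ordinal (isT : 1 < 3)) => // | exists (Ordinal (isT : 2 < 3)) => //].
Qed.
Lemma third_neq (a b : 'I_3) : (third a b != a) && (third a b != b).
Proof.
rewrite /third; case: pickP => [c /andP[]-> ->|H] //=.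
by case: (ord3_ex a b) => c; rewrite H.
Qed.
Lemma third_uniq (a b c : 'I_3) : a != b -> c != a -> c != b -> third a b = c.
Proof.
move=> ab ca cb; case/andP: (third_neq a b) => ta tb.
have := ord3_cases a b (third a b) c ab; rewrite eq_sym ta eq_sym tb => /(_ isT isT).
by rewrite (negbTE ca) (negbTE cb) /= => /eqP.
Qed.
Lemma tri_order (f : 'I_3 -> 'I_3 -> bool) (a b c : 'I_3) : a != b -> a != c -> b != c ->
 f b a = ~~ f a b -> f c b = ~~ f b c -> f c a = ~~ f a c ->
 ~~ [&& f a b, f b c & ~~ f a c] -> ~~ [&& ~~ f a b, ~~ f b c & f a c] ->
 exists r : 'I_3 -> nat, injective r /\ forall x y, x != y -> f x y = (r x < r y).
Proof.
move=> ab ac bc fba fcb fca h1 h2.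
pose ra := (~~ f a b : nat) + (~~ f a c : nat).
pose rb := (f a b : nat) + (~~ f b c : nat).
pose rc := (f a c : nat) + (f b c : nat).
exists (fun x => if x == a then ra else if x == b then rb else rc).
have ba : b != a by rewrite eq_sym.
have ca : c != a by rewrite eq_sym.
have cb : c != b by rewrite eq_sym.
have cases x : [|| x == a, x == b | x == c] by exact: ord3_cases.
split.
  move=> x y; case/or3P: (cases x) => /eqP->; case/or3P: (cases y) => /eqP->;
  rewrite ?eqxx ?(negbTE ba) ?(negbTE ca) ?(negbTE cb) /ra /rb /rc //;
  move: h1 h2; case: (f a b); case: (f b c); case: (f a c) => //.
move=> x y; case/or3P: (cases x) => /eqP->; case/or3P: (cases y) => /eqP->;
  rewrite ?eqxx ?(negbTE ba) ?(negbTE ca) ?(negbTE cb) ?fba ?fcb ?fca /ra /rb /rc //;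
  move: h1 h2; case: (f a b); case: (f b c); case: (f a c) => //.
Qed.
Lemma adj_nat (ra rb rc sa sb sc : nat) : ra != rb -> sa != sb ->
 (rc < ra) = (sc < sa) -> (rc < rb) = (sc < sb) -> ~~ (ra < rb) = (sa < sb) -> rc != ra -> rc != rb -> sc != sa -> sc != sb ->
 (rc < rb) = (rc < ra).
Proof.
move=> h1 h2 h3 h4 h5 h6 h7 h8 h9.
move: h3 h4 h5; case: (ltngtP rc ra); case: (ltngtP rc rb); case: (ltngtP ra rb);
 case: (ltngtP sc sa); case: (ltngtP sc sb); case: (ltngtP sa sb) => //; move=> *; lia.
Qed.
Lemma dart_eqE (Tri : finType) (t t' : Tri) (u v u' v' : 'I_3) :
  ((t, u, v) == (t', u', v') :> dart Tri) = [&& t == t', u == u' & v == v'].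
Proof. by apply/eqP/and3P => [[-> -> ->]|[/eqP-> /eqP-> /eqP->]]. Qed.
Lemma test (Tri : finType) (t t' : Tri) (u v u' v' : 'I_3) (x : dart Tri) :
  (if (t, u, v) == (t', u', v') then x else x) = x.
Proof. rewrite dart_eqE. Abort.
Lemma iso_ext (Tri : finType) (g g' : gluing Tri) (o : dart Tri -> bool) :
  (forall x, is_side x -> g' x = g x) -> br_iso g o g' o.
Proof.
move=> H; exists 1%g, (fun _ => 1%g) => /= -[[t u] v] sx.
have delta_id (y : dart Tri) : (dtri y, dsrc y, dtgt y) = y by case: y => [[]].
by rewrite /= !perm1 delta_id; split=> //; exact: H.
Qed.
Ltac cs s c1 c2 := apply: s => [||||||||||||||||||t u v /negbTE n1 /negbTE n2].
Ltac fin := repeat (first [rewrite dart_eqE | rewrite eqxx |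
   match goal with H : (_ == _) = false |- _ => rewrite H end | progress simpl]); try done.

Lemma main_lemma (Tri : finType) (g : gluing Tri) (o : dart Tri -> bool)
  (t1 t2 : Tri) (a1 b1 a2 b2 : 'I_3) :
  is_triangulation g -> is_branching g o -> a1 != b1 -> t2 != t1 ->
  g (t1, a1, b1) = (t2, a2, b2) -> ambiguous g o (t1, a1, b1) ->
  exists (g1 : gluing Tri) (o1 : dart Tri -> bool),
    bflip g o g1 o1 /\ bflip g1 o1 g (reverse_at g (t1, a1, b1) o).
Proof.
move=> tri ob ab1 t21 gd amb.
have [sgd ggd grd _ _] := tri (t1,a1,b1) ab1.
rewrite gd in sgd ggd grd.
have ab2 : a2 != b2 := sgd.
set c1 := third a1 b1; set c2 := third a2 b2.
have /andP[ca1 cb1] : (c1 != a1) && (c1 != b1) := third_neq a1 b1.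
have /andP[ca2 cb2] : (c2 != a2) && (c2 != b2) := third_neq a2 b2.
have t12 : t1 != t2 by rewrite eq_sym.
have ba1 : b1 != a1 by rewrite eq_sym.
have ba2 : b2 != a2 by rewrite eq_sym.
have ac1 : a1 != c1 by rewrite eq_sym.
have bc1 : b1 != c1 by rewrite eq_sym.
have ac2 : a2 != c2 by rewrite eq_sym.
have bc2 : b2 != c2 by rewrite eq_sym.
have := (negbTE t12, negbTE t21, negbTE ab1, negbTE ba1, negbTE ab2, negbTE ba2,
  negbTE ca1, negbTE ac1, negbTE cb1, negbTE bc1, negbTE ca2, negbTE ac2, negbTE cb2, negbTE bc2).
case=> [[[[[[[[[[[[[F1 F2] F3] F4] F5] F6] F7] F8] F9] F10] F11] F12] F13] F14].
pose phi := flip_phi g (t1, a1, b1).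
pose phiinv := flip_phiinv g (t1, a1, b1).
have phiE x : phi x = if x == (t1,c1,b1) then (t2,a2,b2) else if x == (t1,b1,c1) then (t2,b2,a2)
   else if x == (t2,c2,a2) then (t1,b1,a1) else if x == (t2,a2,c2) then (t1,a1,b1) else x.
  by rewrite /phi /flip_phi gd.
have phiinvE x : phiinv x = if x == (t2,a2,b2) then (t1,c1,b1) else if x == (t2,b2,a2) then (t1,b1,c1)
   else if x == (t1,b1,a1) then (t2,c2,a2) else if x == (t1,a1,b1) then (t2,a2,c2) else x.
  by rewrite /phiinv /flip_phiinv gd.
pose g1 := flip g (t1, a1, b1).
have g1E x : g1 x = if x == (t1,c1,b1) then (t2,a2,c2) else if x == (t1,b1,c1) then (t2,c2,a2)
   else if x == (t2,a2,c2) then (t1,c1,b1) else if x == (t2,c2,a2) then (t1,b1,c1) else phi (g (phiinv x)).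
  by rewrite /g1 /flip gd.
pose E y := [|| y == (t1,a1,b1), y == (t1,b1,a1), y == (t2,a2,b2) | y == (t2,b2,a2)].
pose D y := [|| y == (t1,c1,b1), y == (t1,b1,c1), y == (t2,a2,c2) | y == (t2,c2,a2)].
have EE y : in_edge g (t1,a1,b1) y = E y by rewrite /in_edge gd.
have split3 (P : dart Tri -> Prop) :
  (forall u v, P (t1,u,v)) -> (forall u v, P (t2, u, v)) -> (forall t u v, t != t1 -> t != t2 -> P (t,u,v)) -> forall y, P y.
  move=> H1 H2 H3 [[t u] v]; case: (t =P t1) => [->|/eqP n1]; first exact: H1.
  case: (t =P t2) => [->|/eqP n2]; first exact: H2. exact: H3.
have cov1 u : [|| u == a1, u == b1 | u == c1] by exact: ord3_cases.
have cov2 u : [|| u == a2, u == b2 | u == c2] by exact: ord3_cases.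
have split19 (P : dart Tri -> Prop) : P (t1,a1,a1) -> P (t1,a1,b1) -> P (t1,a1,c1) -> P (t1,b1,a1) -> P (t1,b1,b1) -> P (t1,b1,c1) -> P (t1,c1,a1) -> P (t1,c1,b1) -> P (t1,c1,c1) -> P (t2,a2,a2) -> P (t2,a2,b2) -> P (t2,a2,c2) -> P (t2,b2,a2) -> P (t2,b2,b2) -> P (t2,b2,c2) -> P (t2,c2,a2) -> P (t2,c2,b2) -> P (t2,c2,c2) ->
  (forall t u v, t != t1 -> t != t2 -> P (t,u,v)) -> forall y, P y.
  move=> h0 h1 h2 h3 h4 h5 h6 h7 h8 h9 h10 h11 h12 h13 h14 h15 h16 h17 H3; apply: split3 => [u v|u v|//].
    by case/or3P: (cov1 u) => /eqP->; case/or3P: (cov1 v) => /eqP->.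
  by case/or3P: (cov2 u) => /eqP->; case/or3P: (cov2 v) => /eqP->.
have K3 y : ~~ E y -> phiinv (phi y) = y.
  by move: y; cs split19 cov1 cov2; rewrite /E phiE phiinvE; fin.
have K1 y : ~~ E (phiinv y).
  by move: y; cs split19 cov1 cov2; rewrite /E phiinvE ; fin.
have K2 y : ~~ D (phi y).
  by move: y; cs split19 cov1 cov2; rewrite /D phiE ; fin.
have K7 y : is_side y -> is_side (phiinv y).
  by move: y; cs split19 cov1 cov2; rewrite /is_side phiinvE ; fin.
have K8 y : ~~ D y -> phi y = y.
  by move: y; cs split19 cov1 cov2; rewrite /D phiE ; fin.
have K9 y : ~~ E y -> phiinv y = y.
  by move: y; cs split19 cov1 cov2; rewrite /E phiinvE ; fin.
have ginv y : is_side y -> g (g y) = y by move=> sy; case: (tri y sy).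
have gside y : is_side y -> is_side (g y) by move=> sy; case: (tri y sy).
have [_ gggd grgd _ _] := tri (t2,a2,b2) ab2.
rewrite /= ggd in gggd grgd.
have grd' : g (t1,b1,a1) = (t2,b2,a2) := grd.
have grgd' : g (t2,b2,a2) = (t1,b1,a1) := grgd.
have K6 y : is_side y -> ~~ E y -> ~~ E (g y).
  move=> sy; apply: contra => /or4P[] /eqP gy; rewrite -(ginv y sy) gy /E ?gd ?grd ?ggd ?grgd ?eqxx ?orbT //.
have [obr obg] := ob; have [abr abg] := amb.
have oanti t u v : u != v -> o (t,v,u) = ~~ o (t,u,v).
  move=> uv; case: (obr t) => r [ri hr]; rewrite (hr _ _ uv) (hr v u); last by rewrite eq_sym.
  have ne : r v != r u by apply: contra uv => /eqP/ri->.
  by rewrite ltn_neqAle ne leqNgt.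
have adj1 : o (t1,c1,b1) = o (t1,c1,a1).
  case: (obr t1) => r [ri hr]; case: (abr t1) => r' [ri' hr'].
  have := hr' c1 a1 ca1; have := hr' c1 b1 cb1; have := hr' a1 b1 ab1.
  rewrite /reverse_at !EE /E; fin; rewrite !hr //.
  have nr x y : x != y -> r x != r y by move=> xy; apply: contra xy => /eqP/ri->.
  have nr' x y : x != y -> r' x != r' y by move=> xy; apply: contra xy => /eqP/ri'->.
  by move=> h5 h4 h3; apply: (adj_nat _ _ _ _ _ _ (nr _ _ ab1) (nr' _ _ ab1) h3 h4 h5); first [apply: nr | apply: nr'].
have adj2 : o (t2,c2,b2) = o (t2,c2,a2).
  case: (obr t2) => r [ri hr]; case: (abr t2) => r' [ri' hr'].
  have := hr' c2 a2 ca2; have := hr' c2 b2 cb2; have := hr' a2 b2 ab2.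
  rewrite /reverse_at !EE /E; fin; rewrite !hr //.
  have nr x y : x != y -> r x != r y by move=> xy; apply: contra xy => /eqP/ri->.
  have nr' x y : x != y -> r' x != r' y by move=> xy; apply: contra xy => /eqP/ri'->.
  by move=> h5 h4 h3; apply: (adj_nat _ _ _ _ _ _ (nr _ _ ab2) (nr' _ _ ab2) h3 h4 h5); first [apply: nr | apply: nr'].
pose dl := o (t1,c1,a1) && o (t2,a2,c2).
pose o1 y := if D y then (if (y == (t1,c1,b1)) || (y == (t2,a2,c2)) then dl else ~~ dl) else o (phiinv y).
have g1d' : g1 (t1,c1,b1) = (t2,a2,c2) by rewrite g1E eqxx.
have th1 : third c1 b1 = a1 := third_uniq _ _ _ cb1 ac1 ab1.
have th2 : third a2 c2 = b2 := third_uniq _ _ _ ac2 ba2 bc2.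
have phi'E x : flip_phi g1 (t1,c1,b1) x = phiinv x.
  by move: x; cs split19 cov1 cov2; rewrite /flip_phi g1d' /= th1 th2 phiinvE ; fin.
have phiinv'E x : flip_phiinv g1 (t1,c1,b1) x = phi x.
  by move: x; cs split19 cov1 cov2; rewrite /flip_phiinv g1d' /= th1 th2 phiE ; fin.
have flip2 x : is_side x -> flip g1 (t1,c1,b1) x = g x.
  move=> sx; rewrite /flip g1d' /= th1 th2 phi'E phiinv'E.
  case Ex: (E x).
    by move: Ex; rewrite /E => /or4P[] /eqP ->; fin; rewrite ?gd ?ggd ?grd' ?grgd'.
  have nEx : ~~ E x by rewrite Ex.
  move: Ex; rewrite /E => /norP[/negbTE-> /norP[/negbTE-> /norP[/negbTE-> /negbTE->]]].
  rewrite g1E; have := K2 x; rewrite /D => /norP[/negbTE-> /norP[/negbTE-> /norP[/negbTE-> /negbTE->]]].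
  by rewrite (K3 x nEx) (K3 _ (K6 x sx nEx)).
have o1_ndiag y : ~~ D y -> o1 y = o (phiinv y) by move=> /negbTE Dy; rewrite /o1 Dy.
have ob1 : is_branching g1 o1.
  split.
    move=> t; case: (t =P t1) => [->|/eqP n1].
      apply: (tri_order (fun u v => o1 (t1,u,v)) a1 b1 c1 ab1 ac1 bc1); rewrite /o1 /D !phiinvE; fin;
        rewrite ?(oanti t2 a2 c2 ac2) ?(oanti t1 c1 a1 ca1) ?(oanti t1 c1 b1 cb1) ?(oanti t2 c2 b2 cb2) ?adj1 ?adj2 ?(oanti t2 a2 c2 ac2) /dl; by case: (o (t1,c1,a1)); case: (o (t2,a2,c2)).
    case: (t =P t2) => [->|/eqP n2].
      apply: (tri_order (fun u v => o1 (t2,u,v)) a2 b2 c2 ab2 ac2 bc2); rewrite /o1 /D !phiinvE; fin;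
        rewrite ?(oanti t2 a2 c2 ac2) ?(oanti t1 c1 a1 ca1) ?(oanti t1 c1 b1 cb1) ?(oanti t2 c2 b2 cb2) ?adj1 ?adj2 ?(oanti t2 a2 c2 ac2) /dl; by case: (o (t1,c1,a1)); case: (o (t2,a2,c2)).
    case: (obr t) => r [ri hr]; exists r; split=> // u v uv.
    move/negbTE in n1; move/negbTE in n2.
    rewrite /o1 /D !phiinvE; fin; exact: hr.
  move=> x sx; case Dx: (D x).
    move: Dx; rewrite /D => /or4P[] /eqP->; rewrite g1E /o1 /D; fin.
  have nD : ~~ D x by rewrite Dx.
  rewrite (o1_ndiag x nD) g1E; move: Dx; rewrite /D => /norP[/negbTE-> /norP[/negbTE-> /norP[/negbTE-> /negbTE->]]].
  rewrite o1_ndiag ?K2 //.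
  by rewrite (K3 _ (K6 _ (K7 _ sx) (K1 x))) obg // K7.
exists g1, o1; split.
  exists (t1,a1,b1); split => //; first by rewrite /trapped gd /= F2.
  exists o1; split => //; last by apply: iso_ext.
  move=> x sx; rewrite EE => nE.
  change (o1 (phi x) = o x).
  by rewrite o1_ndiag ?K2 // K3.
exists (t1,c1,b1); split => //; first by rewrite /trapped g1d' /= F2.
exists (reverse_at g (t1,a1,b1) o); split.
- split; first exact: abr.
  by move=> x sx; rewrite flip2 //; exact: abg.
- move=> x sx nI.
  have nD : ~~ D x by move: nI; rewrite /in_edge g1d'.
  by rewrite phi'E /reverse_at EE (negbTE (K1 x)) o1_ndiag.
- by apply: iso_ext => x sx; rewrite flip2.
Qed.

Theorem lemma2p4 (Tri : finType) (g : gluing Tri) (o : dart Tri -> bool)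
    (d : dart Tri) :
  is_triangulation g ->
  tri_connected g ->
  (euler_char g - (n_vertices g)%:Z < 0)%R ->
  is_branching g o ->
  is_side d ->
  ambiguous g o d ->
  ~~ trapped g d ->
  exists (g1 : gluing Tri) (o1 : dart Tri -> bool),
    bflip g o g1 o1 /\ bflip g1 o1 g (reverse_at g d o).
Proof.
move: d => [[t1 a1] b1] tri _ _ ob sd amb ntr.
case gd: (g (t1, a1, b1)) => [[t2 a2] b2].
apply: (main_lemma _ _ _ t1 t2 a1 b1 a2 b2) => //.
by move: ntr; rewrite /trapped gd.
Qed.
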